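(* Let $\mathcal{X}$ be a probability distribution over a set of queries, $k \geq 1$, and $\hat q_1,\dots,\hat q_k,\hat c_1,\dots,\hat c_k : \mathcal{X} \to \mathbb{R}$ measurable functions. Let $\Lambda$ be the set of $\lambda \in \mathbb{R}$ for which there exist $x \in \mathcal{X}$ and $i \neq j$ with $\hat q_i(x) - \lambda \hat c_i(x) = \hat q_j(x) - \lambda \hat c_j(x)$. Let $0 \leq \lambda_1 < \lambda_2$. If $[\lambda_1,\lambda_2] \cap \Lambda = \emptyset$, then $S_{\lambda_1} = S_{\lambda_2}$. Furthermore, if $[\lambda_1,\lambda_2] \cap \Lambda = \{\lambda^*\}$, then $S_\lambda \subseteq S_{\lambda^*}$ for all $\lambda \in [\lambda_1,\lambda_2]$.
   Context: A routing strategy is a measurable function $s : \mathcal{X} \to \mathbb{R}^k$ with $s_i(x) \geq 0$ for all $i$ and $\sum_{i=1}^k s_i(x) = 1$ for all $x$. For $\lambda \in \mathbb{R}^+$, $S_\lambda$ is the set of routing strategies $s$ such that for all $x \in \mathcal{X}$ and $i \in \{1,\dots,k\}$: if $\hat q_i(x) - \lambda \hat c_i(x) < \max_j(\hat q_j(x) - \lambda \hat c_j(x))$ then $s_i(x) = 0$. *)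

(* Defs.v *)
From HB Require Import structures.
From mathcomp Require Import all_boot all_order all_algebra.
From mathcomp Require Import all_classical all_reals all_analysis.
Set Implicit Arguments. Unset Strict Implicit. Unset Printing Implicit Defensive.
Import Order.TTheory GRing.Theory Num.Theory.
Local Open Scope classical_set_scope.
Local Open Scope ring_scope.

Section Routing.
Context (d : measure_display) (T : measurableType d) (R : realType) (k : nat).

Definition score (qhat chat : 'I_k -> T -> R) (lam : R) (i : 'I_k) (x : T) : R :=
  qhat i x - lam * chat i x.

(* max_j v j, computed as a fold of Num.max over all j seeded with v i0
   (any element of the family; since v i0 is itself among the v j, this is
   exactly the maximum over the nonempty index set). *)
Definition maxval (v : 'I_k -> R) (i0 : 'I_k) : R :=
  \big[Num.max/v i0]_(j < k) v j.

Definition routing_strategy (s : 'I_k -> T -> R) : Prop :=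
  (forall i, measurable_fun setT (s i)) /\
  (forall x i, 0 <= s i x) /\
  (forall x, \sum_(i < k) s i x = 1).

Definition S_lam (qhat chat : 'I_k -> T -> R) (lam : R) : set ('I_k -> T -> R) :=
  [set s | routing_strategy s /\
     forall x i, score qhat chat lam i x < maxval (fun j => score qhat chat lam j x) i ->
                 s i x = 0].

Definition tie_set (qhat chat : 'I_k -> T -> R) : set R :=
  [set lam | exists x i j, i != j /\ score qhat chat lam i x = score qhat chat lam j x].

End Routing.

(* Main.v *)
Require Import Defs.
From HB Require Import structures.
From mathcomp Require Import all_boot all_order all_algebra.
From mathcomp Require Import all_classical all_reals all_analysis.
From mathcomp Require Import lra.
Import Order.TTheory GRing.Theory Num.Theory.
Local Open Scope classical_set_scope.
Local Open Scope ring_scope.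

Section Helpers.
Context {R : realType}.

Lemma bigmax_mem (I : eqType) (r : seq I) (x0 : R) (F : I -> R) :
  \big[Num.max/x0]_(j <- r) F j = x0 \/ exists2 j, j \in r & \big[Num.max/x0]_(j <- r) F j = F j.
Proof.
elim: r => [|a r IH]; first by rewrite big_nil; left.
rewrite big_cons maxEle; case: ifP => _.
  case: IH => [->|[j jr ->]]; [by left | by right; exists j => //; rewrite inE jr orbT].
by right; exists a => //; rewrite inE eqxx.
Qed.

Lemma bigmax_ge (I : eqType) (r : seq I) (x0 : R) (F : I -> R) j :
  j \in r -> F j <= \big[Num.max/x0]_(j <- r) F j.
Proof.
elim: r => [//|a r IH]; rewrite inE big_cons le_max => /orP[/eqP->|jr].
  by rewrite lexx.
by rewrite IH ?orbT.
Qed.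

Lemma maxval_lt k (v : 'I_k -> R) i0 i :
  v i < maxval v i0 <-> exists j, v i < v j.
Proof.
rewrite /maxval; split.
  case: (@bigmax_mem _ (index_enum 'I_k) (v i0) v) => [->|[j _ ->]] h; by eexists; exact h.
move=> [j hj]; apply: (lt_le_trans hj); apply: bigmax_ge; exact: mem_index_enum.
Qed.

Lemma affine_zero (a b l m : R) :
  0 < a - l * b -> a - m * b <= 0 ->
  exists mu, ((l <= mu <= m) \/ (m <= mu <= l)) /\ a - mu * b = 0.
Proof.
move=> hl hm.
have hb : b != 0 by apply/eqP => b0; move: hl hm; rewrite b0; lra.
exists (a / b); split; last by rewrite divfK // subrr.
have hmu : a / b * b = a by rewrite divfK.
set mu := a / b in hmu *.
case: (ltgtP b 0) => [bn|bp|]; last by move/eqP; rewrite (negPf hb).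
  right; apply/andP; split; nra.
left; apply/andP; split; nra.
Qed.

End Helpers.

Theorem lemma4 (d : measure_display) (T : measurableType d) (R : realType)
  (P : probability T R) (k : nat) (hk : (1 <= k)%N)
  (qhat chat : 'I_k -> T -> R)
  (mq : forall i, measurable_fun setT (qhat i))
  (mc : forall i, measurable_fun setT (chat i))
  (lam1 lam2 : R) (h0 : 0 <= lam1) (h12 : lam1 < lam2) :
  (`[lam1, lam2] `&` tie_set qhat chat = set0 ->
     S_lam qhat chat lam1 = S_lam qhat chat lam2) /\
  (forall lamstar : R, `[lam1, lam2] `&` tie_set qhat chat = [set lamstar] ->
     forall lam : R, lam \in `[lam1, lam2] ->
       S_lam qhat chat lam `<=` S_lam qhat chat lamstar).
Proof.
have flip : forall x i j (l m : R), score qhat chat l i x < score qhat chat l j x ->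
    score qhat chat m j x <= score qhat chat m i x ->
    exists mu, ((l <= mu <= m) \/ (m <= mu <= l)) /\ i != j /\
      score qhat chat mu i x = score qhat chat mu j x.
  move=> x i j l m hl hm.
  have [mu [hmu e]] := affine_zero (qhat j x - qhat i x) (chat j x - chat i x)
     l m ltac:(move: hl; rewrite /score; lra) ltac:(move: hm; rewrite /score; lra).
  exists mu; split => //; split.
    by apply/eqP => eij; move: hl; rewrite eij ltxx.
  by rewrite /score; lra.
split.
- move=> H.
  have notie : forall mu, lam1 <= mu <= lam2 -> forall x (i j : 'I_k), i != j ->
      score qhat chat mu i x <> score qhat chat mu j x.
    move=> mu hmu x i j nij e.
    have : (`[lam1, lam2] `&` tie_set qhat chat) mu.
      by split; [rewrite /= in_itv /= | exists x, i, j].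
    by rewrite H.
  have same : forall (l m : R), lam1 <= l <= lam2 -> lam1 <= m <= lam2 -> forall x i j,
      score qhat chat l i x < score qhat chat l j x -> score qhat chat m i x < score qhat chat m j x.
    move=> l m hl hm x i j h; rewrite ltNge; apply/negP => h2.
    have [mu [hmu [nij e]]] := flip x i j l m h h2.
    apply: (notie mu _ x i j nij e).
    case: hmu => /andP[? ?]; move: hl hm => /andP[? ?] /andP[? ?]; apply/andP; split; lra.
  have eqS : forall (l m : R), lam1 <= l <= lam2 -> lam1 <= m <= lam2 ->
      S_lam qhat chat l `<=` S_lam qhat chat m.
    move=> l m hl hm s [rs hs]; split => // x i /maxval_lt [j hj].
    apply: hs; apply/maxval_lt; exists j; exact: (same m l hm hl).
  have h1 : lam1 <= lam1 <= lam2 by apply/andP; split; lra.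
  have h2 : lam1 <= lam2 <= lam2 by apply/andP; split; lra.
  by apply/seteqP; split; apply: eqS.
- move=> ls H lam; rewrite in_itv /= => hlam.
  have hls : lam1 <= ls <= lam2.
    have : (`[lam1, lam2] `&` tie_set qhat chat) ls by rewrite H.
    by case; rewrite /= in_itv.
  move=> s [rs hs]; split => // x i /maxval_lt [j hj].
  apply: hs; apply/maxval_lt; exists j.
  rewrite ltNge; apply/negP => h2.
  have [mu [hmu [nij e]]] := flip x i j ls lam hj h2.
  have : (`[lam1, lam2] `&` tie_set qhat chat) mu.
    split; last by exists x, i, j.
    rewrite /= in_itv /=; case/andP: hls => b1 b2; case/andP: hlam => c1 c2.
    case: hmu => /andP[a1 a2]; apply/andP; split.
    - exact: le_trans b1 a1.
    - exact: le_trans a2 c2.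
    - exact: le_trans c1 a1.
    - exact: le_trans a2 b2.
  rewrite H => /= emu; move: e; rewrite emu => e.
  by move: hj; rewrite e ltxx.
Qed.
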